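(* Let $1\leq c\leq d$ be integers with $c\equiv i\pmod 5$, $d\equiv j\pmod 5$, $0\le i,j\le 4$, and let $a$ be one of the values $a_{ij}$ listed below (with $a_{ij}:=a_{ji}$ when $i>j$): $(0,0)\!:1,2,3,4$; $(0,1)\!:2,3,4$; $(0,2)\!:1,3,4$; $(0,3)\!:1,2,4$; $(0,4)\!:1,2,3$; $(1,1)\!:3,4$; $(1,2)\!:4$; $(1,3)\!:2$; $(1,4)\!:2,3$; $(2,2)\!:1,3$; $(2,3)\!:1,4$; $(2,4)\!:3$; $(3,3)\!:2,4$; $(3,4)\!:1$; $(4,4)\!:1,2$. Then for every $n\ge 0$ and every $0\le k\le 4$, \[ N_{[c,d]}(k,5,5n+a)=\frac{p_{[c^2d^2]}(5n+a)}{5}, \] and in particular $p_{[c^2d^2]}(5n+a)\equiv 0\pmod 5$.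
   Context: A 4-colored partition of type $(c,d)$ of $n$ is a quadruple $(\pi_r,\pi_b,\pi_y,\pi_o)$ of ordinary partitions with total sum of parts $n$, such that all parts of $\pi_r,\pi_b$ are divisible by $c$ and all parts of $\pi_y,\pi_o$ are divisible by $d$. Their number is $p_{[c^2d^2]}(n)$, i.e. $\sum_n p_{[c^2d^2]}(n)q^n=\prod_{k\ge1}(1-q^{ck})^{-2}(1-q^{dk})^{-2}$. The 4-colored rank is $r_4=\ell(\pi_r)-\ell(\pi_b)+\ell(\pi_y)-\ell(\pi_o)$, where $\ell$ is the number of parts. $N_{[c,d]}(k,5,n)$ denotes the number of 4-colored partitions of $n$ of type $(c,d)$ with $r_4\equiv k\pmod 5$. *)

(* Defs.v *)
From mathcomp Require Import all_boot all_algebra.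
Set Implicit Arguments. Unset Strict Implicit. Unset Printing Implicit Defensive.
Import GRing.Theory Num.Theory.

(* An ordinary partition whose parts are all <= N (and with at most N parts of
   each size) is encoded by its multiplicity function:
   mult i = number of parts equal to i.+1.  Every partition of any m <= N
   is faithfully represented in this type. *)
Definition mpart (N : nat) := {ffun 'I_N -> 'I_N.+1}.

Definition psum N (m : mpart N) : nat := \sum_(i < N) i.+1 * m i.
Definition plen N (m : mpart N) : nat := \sum_(i < N) (m i : nat).
Definition pdiv N (c : nat) (m : mpart N) : bool :=
  [forall i : 'I_N, (0 < m i) ==> (c %| i.+1)].

Definition quad N := (mpart N * mpart N * mpart N * mpart N)%type.
Definition q_r N (q : quad N) := q.1.1.1.
Definition q_b N (q : quad N) := q.1.1.2.
Definition q_y N (q : quad N) := q.1.2.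
Definition q_o N (q : quad N) := q.2.

Definition colored4 (c d n : nat) : {set quad n} :=
  [set q : quad n | [&& pdiv c (q_r q), pdiv c (q_b q), pdiv d (q_y q),
     pdiv d (q_o q) &
     psum (q_r q) + psum (q_b q) + psum (q_y q) + psum (q_o q) == n]].

Definition rank4 N (q : quad N) : int :=
  ((plen (q_r q))%:Z - (plen (q_b q))%:Z + (plen (q_y q))%:Z
   - (plen (q_o q))%:Z)%R.

Definition p_c2d2 (c d n : nat) : nat := #|colored4 c d n|.

Definition N_cd (c d k n : nat) : nat :=
  #|[set q in colored4 c d n | (rank4 q == k%:Z %[mod 5])%Z]|.

Definition a_tbl (i j : nat) : seq nat :=
  match i, j with
  | 0, 0 => [:: 1; 2; 3; 4]
  | 0, 1 => [:: 2; 3; 4]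
  | 0, 2 => [:: 1; 3; 4]
  | 0, 3 => [:: 1; 2; 4]
  | 0, 4 => [:: 1; 2; 3]
  | 1, 1 => [:: 3; 4]
  | 1, 2 => [:: 4]
  | 1, 3 => [:: 2]
  | 1, 4 => [:: 2; 3]
  | 2, 2 => [:: 1; 3]
  | 2, 3 => [:: 1; 4]
  | 2, 4 => [:: 3]
  | 3, 3 => [:: 2; 4]
  | 3, 4 => [:: 1]
  | 4, 4 => [:: 1; 2]
  | _, _ => [::]
  end.

Definition a_vals (i j : nat) : seq nat :=
  if i <= j then a_tbl i j else a_tbl j i.

(* Main.v *)
Require Import Defs.
From mathcomp Require Import all_boot all_algebra.
From mathcomp Require Import all_field.
From mathcomp Require Import zify ring.
Import GRing.Theory Num.Theory.

Section Trunc.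
Local Open Scope ring_scope.
Notation P := {poly algC}.
Notation A := {poly algC}.

Definition eqB (B : nat) (p q : P) := forall m, (m <= B)%N -> p`_m = q`_m.

Lemma eqB_refl B p : eqB B p p. Proof. by []. Qed.
Lemma eqB_sym B p q : eqB B p q -> eqB B q p. Proof. by move=> h m hm; rewrite h. Qed.
Lemma eqB_trans B p q r : eqB B p q -> eqB B q r -> eqB B p r.
Proof. by move=> h1 h2 m hm; rewrite h1 // h2. Qed.

Lemma eqB_mul B p p' q q' : eqB B p p' -> eqB B q q' -> eqB B (p * q) (p' * q').
Proof.
move=> h1 h2 m hm; rewrite !coefM; apply: eq_bigr => i _.
rewrite h1 ?h2 //; last by apply: leq_trans hm; rewrite -ltnS.
by apply: leq_trans (leq_subr _ _) hm.
Qed.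

Lemma eqB_add B p p' q q' : eqB B p p' -> eqB B q q' -> eqB B (p + q) (p' + q').
Proof. by move=> h1 h2 m hm; rewrite !coefD h1 ?h2. Qed.

Lemma eqB_opp B p p' : eqB B p p' -> eqB B (- p) (- p').
Proof. by move=> h1 m hm; rewrite !coefN h1. Qed.

Lemma eqB_sub B p p' q q' : eqB B p p' -> eqB B q q' -> eqB B (p - q) (p' - q').
Proof. by move=> h1 h2; apply: eqB_add => //; apply: eqB_opp. Qed.

Lemma eqB_scale B c p p' : eqB B p p' -> eqB B (c *: p) (c *: p').
Proof. by move=> h1 m hm; rewrite !coefZ h1. Qed.

Lemma eqB_sum B (I : Type) (r : seq I) (Pr : pred I) (F G : I -> P) :
  (forall i, Pr i -> eqB B (F i) (G i)) ->
  eqB B (\sum_(i <- r | Pr i) F i) (\sum_(i <- r | Pr i) G i).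
Proof.
move=> h; apply: (big_ind2 (eqB B)) => //; first by move=> *; apply: eqB_add.
Qed.

Lemma eqB_prod B (I : Type) (r : seq I) (Pr : pred I) (F G : I -> P) :
  (forall i, Pr i -> eqB B (F i) (G i)) ->
  eqB B (\prod_(i <- r | Pr i) F i) (\prod_(i <- r | Pr i) G i).
Proof.
move=> h; apply: (big_ind2 (eqB B)) => //; first by move=> *; apply: eqB_mul.
Qed.

Lemma eqB_Xn B k (p : P) : (B < k)%N -> eqB B ('X^k * p) 0.
Proof. by move=> hk m hm; rewrite coefXnM coef0 ifT //; apply: leq_ltn_trans hk. Qed.

Lemma eqB_1X B k (c : algC) : (B < k)%N -> eqB B (1 + c *: 'X^k) 1.
Proof.
move=> hk m hm; rewrite coefD coefZ coefXn; case: eqP => [e|]; last by rewrite mulr0 addr0.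
by move: hk; rewrite -e ltnNge hm.
Qed.

Lemma eqB_cancel0 B (p r : P) : p`_0 = 1 -> eqB B (p * r) 0 -> eqB B r 0.
Proof.
move=> p0 h m; elim: m {-2}m (leqnn m) => [|M IH] m hmM hm.
  by move: hmM hm; rewrite leqn0 => /eqP -> hm; have := h 0 hm; rewrite coef0M p0 mul1r.
have := h m hm; rewrite coefMr big_ord_recr /= subnn p0 mul1r big1 ?add0r // => i _.
rewrite (IH i) ?mulr0 //.
all: try (have := ltn_ord i; lia). by rewrite coef0 mulr0.
Qed.

Lemma eqB_cancel B (p r s : P) : p`_0 = 1 -> eqB B (p * r) (p * s) -> eqB B r s.
Proof.
move=> p0 h; have : eqB B (r - s) 0.
  apply: (@eqB_cancel0 B p (r - s) p0) => m hm; rewrite mulrBr coefB h // subrr coef0 //.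
by move=> h2 m hm; have := h2 m hm; rewrite coefB coef0 => /eqP; rewrite subr_eq0 => /eqP.
Qed.

Lemma eqB_le B B' (p q : P) : (B' <= B)%N -> eqB B p q -> eqB B' p q.
Proof. by move=> hB h m hm; apply: h; apply: leq_trans hB. Qed.

Lemma eqB_prod_trunc B (F : nat -> P) M :
  (B <= M)%N -> (forall k, (B <= k)%N -> eqB B (F k) 1) ->
  eqB B (\prod_(k < M) F k) (\prod_(k < B) F k).
Proof.
move=> hM hF; rewrite -(subnKC hM); elim: (M - B)%N => [|d IH]; first by rewrite addn0.
rewrite addnS big_ord_recr /= -[X in eqB _ _ X]mulr1; apply: eqB_mul => //.
by apply: hF; apply: leq_addr.
Qed.


Notation AA := {poly {poly algC}}.

Definition tr (d : nat) : nat := (\sum_(k < d.+1) k)%N.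
Lemma trS d : tr d.+1 = (tr d + d.+1)%N.
Proof. by rewrite /tr big_ord_recr. Qed.
Lemma tr_ge d : (d <= tr d)%N.
Proof. by case: d => // d; rewrite trS leq_addl. Qed.
Definition tri (i N : nat) : nat := if (N <= i)%N then tr (i - N) else tr (N - i - 1).

Lemma triS i N : (0 < N)%N -> (tri i.+1 N + (N - 1) = tri i N + i)%N.
Proof.
move=> N0; rewrite /tri; case: (leqP N i) => h.
  have -> : (N <= i.+1)%N by lia.
  have -> : (i.+1 - N = (i - N).+1)%N by lia.
  rewrite trS; lia.
case: (leqP N i.+1) => h2.
  have -> : (i.+1 - N = 0)%N by lia.
  have -> : (N - i - 1 = 0)%N by lia.
  rewrite /tr big_ord1; lia.
have -> : (N - i - 1 = (N - i.+1 - 1).+1)%N by lia.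
rewrite trS; lia.
Qed.

Lemma tri_sym i N : (i < 2 * N)%N -> tri (2 * N - 1 - i) N = tri i N.
Proof.
move=> h; rewrite /tri; case: (leqP N i) => h1.
  have -> : (N <= 2 * N - 1 - i)%N = false by apply/negbTE; lia.
  congr tr; lia.
have -> : (N <= 2 * N - 1 - i)%N by lia.
congr tr; lia.
Qed.

Definition LL N : AA := \prod_(k < N) (1 + ('X^(k.+1) : A)%:P * 'X).
Definition MM N : AA := \prod_(k < N) ('X + ('X^k : A)%:P).
Definition TT N : AA := LL N * MM N.
Definition cc N i : A := (TT N)`_i.
Definition PP m : A := \prod_(k < m) (1 - 'X^(k.+1)).

Lemma coef_scaleX (a : A) (p : AA) i : (p \Po (a%:P * 'X))`_i = a ^+ i * p`_i.
Proof.
elim/poly_ind: p i => [|p c IH] i; first by rewrite comp_poly0 !coef0 mulr0.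
rewrite comp_poly_MXaddC !coefD !coefC coefMX mulrA coefMX.
case: i => [|i] /=; first by rewrite mul1r add0r.
by rewrite !addr0 coefMC IH exprSr mulrAC.
Qed.

Lemma FE N : (0 < N)%N ->
  ('X + ('X^(N.-1) : A)%:P) * (TT N \Po (('X : A)%:P * 'X)) =
  ('X^(N.-1) : A)%:P * (1 + ('X^(N.+1) : A)%:P * 'X) * TT N.
Proof.
case: N => // n _ /=.
set Y : AA := ('X : A)%:P.
have sL : LL n.+1 \Po (Y * 'X) = \prod_(k < n.+1) (1 + ('X^(k.+2) : A)%:P * 'X).
  rewrite /LL rmorph_prod; apply: eq_bigr => k _.
  by rewrite rmorphD rmorph1 rmorphM /= comp_polyC comp_polyX mulrA -rmorphM /= -exprSr.
have sM : MM n.+1 \Po (Y * 'X) = \prod_(k < n.+1) (Y * 'X + ('X^k : A)%:P).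
  rewrite /MM rmorph_prod; apply: eq_bigr => k _.
  by rewrite rmorphD /= comp_polyC comp_polyX.
rewrite /TT comp_polyM sL sM /LL /MM.
rewrite big_ord_recr /= [X in _ = _ * (X * _)]big_ord_recl /=.
rewrite big_ord_recl /= [X in _ = _ * (_ * X)]big_ord_recr /=.
have e : \prod_(i < n) (Y * 'X + ('X^(bump 0 i) : A)%:P) =
   Y ^+ n * \prod_(i < n) ('X + ('X^i : A)%:P).
  rewrite (eq_bigr (fun i : 'I_n => Y * ('X + ('X^i : A)%:P))); last first.
    by move=> k _; rewrite /bump /= add1n exprS rmorphM /= mulrDr.
  by rewrite big_split /= prodr_const card_ord.
rewrite e.
rewrite (eq_bigr (fun i : 'I_n => 1 + ('X^(i.+2) : A)%:P * 'X)); last first.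
  by move=> i _; rewrite /bump /=.
set U := \prod_(i < n) (1 + ('X^(i.+2) : A)%:P * 'X).
set V := \prod_(i < n) ('X + ('X^i : A)%:P).
have eY : forall k, (('X : A) ^+ k)%:P = Y ^+ k by move=> k; rewrite rmorphXn.
rewrite !eY expr0 expr1 -/Y.
ring.
Qed.

Lemma rec_cc N i : (0 < N)%N ->
  'X^(N.-1) * (1 - 'X^(i.+1)) * cc N i.+1 = ('X^i - 'X^(2 * N)) * cc N i.
Proof.
move=> N0; have := congr1 (fun p : AA => p`_(i.+1)) (@FE N N0) => /=.
rewrite mulrDl coefD coefXM coefCM !coef_scaleX /=.
rewrite -mulrA mulrDl mul1r coefCM coefD -mulrA coefCM coefXM /=.
rewrite -/(cc N i) -/(cc N i.+1) => H.
have eX : ('X^(2 * N) : A) = 'X^(N.-1) * 'X^(N.+1) by rewrite -exprD; congr (_ ^+ _); lia.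
rewrite eX; apply/eqP; rewrite -subr_eq0; apply/eqP.
set x := cc N i in H *; set y := cc N i.+1 in H *.
set a : A := 'X^(N.-1) in H *; set b : A := 'X^(N.+1) in H *.
have -> : a * (1 - 'X^(i.+1)) * y - ('X^i - a * b) * x =
   - (('X^i * x + a * ('X^(i.+1) * y)) - a * (y + b * x)) by ring.
by rewrite H subrr oppr0.
Qed.

Lemma PP_S m : PP m.+1 = PP m * (1 - 'X^(m.+1)).
Proof. by rewrite /PP big_ord_recr. Qed.

Lemma coef0_PP m : (PP m)`_0 = 1.
Proof.
rewrite -horner_coef0 /PP horner_prod big1 // => k _.
by rewrite hornerD hornerN hornerC hornerXn expr0n /= subr0.
Qed.

Lemma oneX_neq0 k : (0 < k)%N -> (1 - 'X^k : A) != 0.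
Proof.
move=> k0; apply/eqP => /(congr1 (fun p : A => p`_0)).
by rewrite coefB coef1 coefXn coef0 /= eq_sym gtn_eqF // subr0 => /eqP; rewrite oner_eq0.
Qed.

Lemma cc0 N : (0 < N)%N -> cc N 0 = 'X^(tr N.-1).
Proof.
case: N => // n _; rewrite /cc -horner_coef0 /TT /LL /MM hornerM !horner_prod.
rewrite big1 ?mul1r; last first.
  by move=> k _; rewrite hornerD hornerM hornerX mulr0 addr0 hornerC.
under eq_bigr do rewrite hornerD hornerX hornerC add0r.
by rewrite prodrXr /tr /=.
Qed.

Lemma G_cc N i : (0 < N)%N -> (i <= 2 * N)%N ->
  cc N i * PP i * PP (2 * N - i) = 'X^(tri i N) * PP (2 * N).
Proof.
move=> N0; elim: i => [|i IH] hi.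
  rewrite cc0 // /PP big_ord0 mulr1 subn0 /tri leqNgt N0 /=.
  by congr ('X^(tr _) * _); lia.
have IH' := IH (ltnW hi).
have e2 : (2 * N - i = (2 * N - i.+1).+1)%N by lia.
have hne : ('X^(N.-1) * (1 - 'X^(2 * N - i)) : A) != 0.
  by rewrite mulf_neq0 ?expf_neq0 ?polyX_eq0 // oneX_neq0 //; lia.
apply: (mulIf hne).
transitivity ('X^(N.-1) * (1 - 'X^(i.+1)) * cc N i.+1 * PP i * PP (2 * N - i)).
  rewrite PP_S e2 PP_S -e2; ring.
rewrite rec_cc // (_ : ('X^i - 'X^(2 * N) : A) = 'X^i * (1 - 'X^(2 * N - i))); last first.
  by rewrite mulrBr mulr1 -exprD; congr (_ - _ ^+ _); lia.
have -> : 'X^i * (1 - 'X^(2 * N - i)) * cc N i * PP i * PP (2 * N - i) =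
  'X^i * (1 - 'X^(2 * N - i)) * (cc N i * PP i * PP (2 * N - i)) by ring.
rewrite IH'.
have eT : ('X^(tri i.+1 N) : A) * 'X^(N.-1) = 'X^(tri i N) * 'X^i.
  by rewrite -!exprD; congr (_ ^+ _); have := @triS i N N0; lia.
transitivity ('X^(tri i N) * 'X^i * (1 - 'X^(2 * N - i)) * PP (2 * N)); first ring.
rewrite -eT; ring.
Qed.

Lemma cc_high N i : (0 < N)%N -> (2 * N < i)%N -> cc N i = 0.
Proof.
move=> N0; elim: i => // i IH hi.
have hne : ('X^(N.-1) * (1 - 'X^(i.+1)) : A) != 0.
  by rewrite mulf_neq0 ?expf_neq0 ?polyX_eq0 // oneX_neq0.
suff : 'X^(N.-1) * (1 - 'X^(i.+1)) * cc N i.+1 == 0.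
  by rewrite mulf_eq0 (negbTE hne) /= => /eqP.
rewrite rec_cc //.
case: (ltngtP (2 * N) i) => h.
- by rewrite IH // mulr0.
- lia.
- by rewrite h subrr mul0r.
Qed.



Lemma eval_TT N u : (0 < N)%N ->
  (TT N).[u%:P] = \sum_(i < (2 * N).+1) cc N i * (u%:P) ^+ i.
Proof.
move=> N0; apply: horner_coef_wide; apply/leq_sizeP => j hj.
by apply: cc_high.
Qed.

Lemma oneX_trunc B k : (B < k)%N -> eqB B (1 - 'X^k) 1.
Proof. by move=> hk; rewrite -scaleN1r; apply: eqB_1X. Qed.

Lemma PP_trunc B m : (B <= m)%N -> eqB B (PP m) (PP B).
Proof. by move=> hm; apply: (@eqB_prod_trunc B (fun k => 1 - 'X^(k.+1)) m) => // k hk; apply: oneX_trunc. Qed.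

Lemma key_cc B N i : (2 * B + 2 <= N)%N -> (i <= 2 * N)%N ->
  eqB B (PP B * cc N i) 'X^(tri i N).
Proof.
move=> hN hi; have N0 : (0 < N)%N by lia.
have G := @G_cc N i N0 hi.
case h: ((B <= i) && (B <= 2 * N - i))%N.
  move/andP: h => [h1 h2].
  apply: (@eqB_cancel B (PP B)); first exact: coef0_PP.
  apply: (@eqB_trans _ _ (cc N i * PP i * PP (2 * N - i))).
    rewrite mulrA mulrC -mulrA; apply: eqB_mul; first exact: eqB_refl.
    by apply: eqB_mul; apply: eqB_sym; apply: PP_trunc.
  rewrite G mulrC; apply: eqB_mul; first by apply: PP_trunc; lia.
  exact: eqB_refl.
have ht : (B < tri i N)%N.
  have h' : (i < B)%N \/ (2 * N - i < B)%N.
    by move/negbT: h; rewrite negb_and -!ltnNge => /orP [] ?; [left | right].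
  rewrite /tri; case: (leqP N i) => h3.
    by apply: (@leq_trans (i - N)%N); [lia | apply: tr_ge].
  by apply: (@leq_trans (N - i - 1)%N); [lia | apply: tr_ge].
have hc : eqB B (cc N i) 0.
  apply: (@eqB_cancel0 B (PP i * PP (2 * N - i))).
    by rewrite coef0M !coef0_PP mulr1.
  rewrite mulrC mulrA G; exact: eqB_Xn.
apply: (@eqB_trans _ _ (PP B * 0)).
  by apply: eqB_mul; [exact: eqB_refl | exact: hc].
rewrite mulr0.
by apply: eqB_sym; rewrite -(mulr1 'X^_); apply: eqB_Xn.
Qed.

Lemma jtp_trunc B N u : (2 * B + 2 <= N)%N ->
  eqB B (PP B * (TT N).[u%:P]) (\sum_(i < (2 * N).+1) u ^+ i *: 'X^(tri i N)).
Proof.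
move=> hN; have N0 : (0 < N)%N by lia.
rewrite eval_TT // mulr_sumr; apply: eqB_sum => i _.
rewrite -rmorphXn /= mulrA mulrC mul_polyC; apply: eqB_scale.
by apply: key_cc => //; rewrite -ltnS.
Qed.

End Trunc.
Arguments eqB_sym {B p q}.
Arguments eqB_trans {B p q r}.
Arguments eqB_mul {B p p' q q'}.
Arguments eqB_add {B p p' q q'}.
Arguments eqB_scale {B c p p'}.

Section Supp.
Local Open Scope ring_scope.
Notation A := {poly algC}.
Variable w : algC.
Hypothesis pw : 5.-primitive_root w.
Let u := - w ^+ 2.
Let v := - w ^+ 3.

Lemma w5 : w ^+ 5 = 1. Proof. exact: prim_expr_order pw. Qed.
Lemma uv : u * v = 1. Proof. by rewrite /u /v mulrNN -exprD w5. Qed.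
Lemma u5 : u ^+ 5 = -1.
Proof. by rewrite /u exprNn -exprM mulnC exprM w5 expr1n mulr1 -signr_odd /= expr1. Qed.
Lemma u10 : u ^+ 10 = 1.
Proof. by rewrite (_ : 10%N = (5 * 2)%N) // exprM u5 sqrrN expr1n. Qed.
Lemma onepu_neq0 : 1 + u != 0.
Proof.
rewrite /u subr_eq0; apply/negP => /eqP h.
by move: (eq_prim_root_expr pw 2 0); rewrite expr0 -h eqxx.
Qed.
Lemma u_neq0 : u != 0.
Proof. by apply/eqP => h; move: uv; rewrite h mul0r => /eqP; rewrite eq_sym oner_eq0. Qed.

Lemma tr2 d : (2 * tr d = d * d.+1)%N.
Proof. elim: d => [|d IH]; first by rewrite /tr big_ord1. rewrite trS mulnDr IH; lia. Qed.

Lemma tr_mod_aux : [forall a : 'I_5, forall b : 'I_5,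
  ((2 * b) %% 5 == (a * (a + 1)) %% 5)%N ==>
  ((b == 0 :> nat) || (b == 1 :> nat) || ((b == 3 :> nat) && (a == 2 :> nat)))].
Proof. apply/forallP => -[[|[|[|[|[|a]]]]] ha] /=; apply/forallP => -[[|[|[|[|[|b]]]]] hb] /= //. Qed.

Lemma tr_mod d : (tr d %% 5 == 0)%N || (tr d %% 5 == 1)%N || ((tr d %% 5 == 3)%N && (d %% 5 == 2)%N).
Proof.
have h1 := tr2 d.
have h2 : ((2 * (tr d %% 5)) %% 5 = ((d %% 5) * (d %% 5 + 1)) %% 5)%N.
  by rewrite modnMmr h1 -modnMm -(addn1 d) -modnDml modnMmr.
have ha : (d %% 5 < 5)%N by apply: ltn_pmod.
have hb : (tr d %% 5 < 5)%N by apply: ltn_pmod.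
move/forallP: tr_mod_aux => /(_ (Ordinal ha)) /forallP /(_ (Ordinal hb)) /implyP /=.
by apply; apply/eqP.
Qed.

Lemma vanish N m : (0 < N)%N -> ((m %% 5 == 2) || (m %% 5 == 3) || (m %% 5 == 4))%N ->
  (m < tr N)%N -> \sum_(i < (2 * N).+1) u ^+ i * (m == tri i N)%:R = 0.
Proof.
move=> N0 hm hmN; rewrite big_ord_recr /=.
have -> : tri (2 * N) N = tr N by rewrite /tri ifT; [congr tr; lia | lia].
rewrite (ltn_eqF hmN) mulr0 addr0.
set f := fun i : 'I_(2 * N) => u ^+ i * (m == tri i N)%:R.
have hf : forall i, f i + f (rev_ord i) = 0.
  move=> i; rewrite /f /=.
  have hi := ltn_ord i.
  have -> : tri (2 * N - i.+1) N = tri i N.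
    by rewrite -(@tri_sym i N hi); congr tri; lia.
  case: eqP => [e|_]; last by rewrite !mulr0 addr0.
  set dd := if (N <= i)%N then (i - N)%N else (N - i - 1)%N.
  have ht := tr_mod dd.
  have e' : tr dd = m by rewrite e /tri /dd; case: leqP.
  rewrite e' in ht.
  have hd : (dd %% 5 = 2)%N.
    by move: hm ht; case: (m %% 5)%N => [|[|[|[|[|?]]]]] //= _ /eqP.
  have hr : (i %% 5 = (N + 2) %% 5)%N.
    by move: hd; rewrite /dd; case: leqP => ?; lia.
  have h10 : ((2 * N - i.+1) %% 10 = (i %% 10 + 5) %% 10)%N by lia.
  have t1 : (true%:R : algC) = 1 by []. rewrite t1 !mulr1.
  have -> : u ^+ (2 * N - i.+1) = - u ^+ i.
    by rewrite -(expr_mod (2 * N - i.+1) u10) h10 (expr_mod _ u10) exprD u5 mulrN1 (expr_mod i u10).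
  by rewrite subrr.
suff : 2%:R * \sum_(i < 2 * N) f i = 0.
  by move/eqP; rewrite mulf_eq0 pnatr_eq0 /= => /eqP.
rewrite mulr_natl mulr2n {1}(reindex_inj rev_ord_inj) /= -big_split /=.
by rewrite big1 // => i _; rewrite addrC hf.
Qed.

Lemma TT_eval_u N : (0 < N)%N ->
  (TT N).[u%:P] = ((1 + u) * u ^+ N.-1) *:
   (\prod_(k < N) (1 + u *: 'X^(k.+1)) * \prod_(k < N.-1) (1 + v *: 'X^(k.+1))).
Proof.
case: N => // n _ /=.
rewrite /TT /LL /MM hornerM !horner_prod.
under eq_bigr do rewrite hornerD hornerM hornerX hornerC hornerC mulrC mul_polyC.
under [X in _ * X = _]eq_bigr do rewrite hornerD hornerX hornerC.
rewrite [X in _ * X = _]big_ord_recl /=.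
have e : \prod_(i < n) (u%:P + 'X^(bump 0 i)) = (u ^+ n) *: \prod_(i < n) (1 + v *: 'X^(i.+1)).
  rewrite (eq_bigr (fun i : 'I_n => u%:P * (1 + v *: 'X^(i.+1)))); last first.
    move=> i _; rewrite /bump /= add1n mulrDr mulr1 mul_polyC scalerA uv scale1r.
    by [].
  by rewrite big_split /= prodr_const card_ord -rmorphXn mul_polyC.
rewrite e expr0.
set L := \prod_(i < n.+1) _.
set V := \prod_(k < n) _.
rewrite -!mul_polyC rmorphM rmorphD /= polyC1 !rmorphXn; ring.
Qed.

Definition HH K : A := \prod_(k < K) ((1 - 'X^(k.+1)) * (1 + u *: 'X^(k.+1)) * (1 + v *: 'X^(k.+1))).

Lemma HH_supp K m : (m <= K)%N -> ((m %% 5 == 2) || (m %% 5 == 3) || (m %% 5 == 4))%N ->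
  (HH K)`_m = 0.
Proof.
move=> hmK hm.
pose N := (2 * K + 2)%N.
have N0 : (0 < N)%N by rewrite /N; lia.
have J := @jtp_trunc K N u (leqnn _).
have E : eqB K (PP K * (TT N).[u%:P]) (((1 + u) * u ^+ N.-1) *: HH K).
  rewrite TT_eval_u // -scalerAr; apply: eqB_scale.
  rewrite /HH !big_split /= -mulrA; apply: eqB_mul; first exact: eqB_refl.
  apply: eqB_mul.
    apply: (@eqB_prod_trunc K (fun k => 1 + u *: 'X^(k.+1))); first by rewrite /N; lia.
    by move=> k hk; apply: eqB_1X.
  apply: (@eqB_prod_trunc K (fun k => 1 + v *: 'X^(k.+1))); first by rewrite /N; lia.
  by move=> k hk; apply: eqB_1X.
have := eqB_trans (eqB_sym E) J m hmK.
rewrite coefZ coef_sum.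
under eq_bigr do rewrite coefZ coefXn.
rewrite (@vanish N m N0 hm); last first.
  by apply: leq_trans (tr_ge _); rewrite /N; lia.
by move/eqP; rewrite mulf_eq0 mulf_eq0 expf_eq0 (negbTE onepu_neq0) (negbTE u_neq0) andbF /= => /eqP.
Qed.

Lemma five_prod (y : A) :
  (1 - w *: y) * (1 - w ^+ 4 *: y) * ((1 - y) * (1 + u *: y) * (1 + v *: y)) = 1 - y ^+ 5.
Proof.
have hs : 1 + w + w ^+ 2 + w ^+ 3 + w ^+ 4 = 0.
  have : (w - 1) * (1 + w + w ^+ 2 + w ^+ 3 + w ^+ 4) = 0.
    by rewrite (_ : _ * _ = w ^+ 5 - 1); [rewrite w5 subrr | ring].
  move/eqP; rewrite mulf_eq0 subr_eq0 => /orP [/eqP h|/eqP //].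
  by move: (eq_prim_root_expr pw 1 0); rewrite expr1 expr0 h eqxx.
rewrite /u /v -!mul_polyC !rmorphN /= !rmorphXn /=.
set W := w%:P.
have hW : 1 + W + W ^+ 2 + W ^+ 3 + W ^+ 4 = 0.
  by have := congr1 (fun x : algC => x%:P) hs; rewrite /= !rmorphD !rmorphXn /= polyC1 polyC0.
have -> : (1 - W * y) * (1 - W ^+ 4 * y) * ((1 - y) * (1 + - W ^+ 2 * y) * (1 + - W ^+ 3 * y)) =
  (1 - y ^+ 5) + (- y + y ^+ 5 + W * y ^+ 2 - W * y ^+ 5 + W ^+ 3 * y ^+ 2 - W ^+ 3 * y ^+ 3
    - W ^+ 5 * y ^+ 3 + W ^+ 5 * y ^+ 5 + W ^+ 6 * y ^+ 4 - W ^+ 6 * y ^+ 5) *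
   (1 + W + W ^+ 2 + W ^+ 3 + W ^+ 4) by ring.
by rewrite hW mulr0 addr0.
Qed.

Definition hfy (y : A) : A := (1 - y) * (1 + u *: y) * (1 + v *: y).

Lemma hfy_comp (y q : A) : hfy y \Po q = hfy (y \Po q).
Proof. by rewrite /hfy !rmorphM /= !rmorphD /= !rmorphN /= rmorph1 !linearZ. Qed.

Definition Hc (c N : nat) : A := \prod_(i < N) (if (c %| i.+1)%N then hfy 'X^(i.+1) else 1).

Lemma Hc_comp c N : (0 < c)%N -> Hc c N = HH (N %/ c) \Po 'X^c.
Proof.
move=> c0; elim: N => [|N IH].
  by rewrite /Hc big_ord0 div0n /HH big_ord0 rmorph1.
rewrite /Hc big_ord_recr /= -/(Hc c N) IH (divnS _ c0).
case: ifP => hd /=; last by rewrite add0n mulr1.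
rewrite add1n /HH big_ord_recr /= rmorphM /=; congr (_ * _).
rewrite -/(hfy 'X^((N %/ c).+1)) hfy_comp comp_Xn_poly -exprM.
have := divnK hd; rewrite (divnS _ c0) hd add1n => e.
by rewrite mulnC e.
Qed.

Definition good (c m : nat) : bool := ((m %% 5 == 0) || (m %% 5 == c %% 5))%N.

Lemma good_mod c m : good c m = good c (m %% 5).
Proof. by rewrite /good modn_mod. Qed.

Lemma Hc_supp c N m : (0 < c)%N -> (m <= N)%N -> ~~ good c m -> (Hc c N)`_m = 0.
Proof.
move=> c0 hm hg; rewrite Hc_comp // coef_comp_poly_Xn //; case: ifP => // hdv.
apply: HH_supp; first exact: leq_div2r.
have em := divnK hdv.
have hmod : (m %% 5 = ((m %/ c %% 5) * (c %% 5)) %% 5)%N by rewrite modnMm em.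
have hq : (m %/ c %% 5 < 5)%N by apply: ltn_pmod.
move: hg hq; rewrite /good hmod; case: (m %/ c %% 5)%N => [|[|[|[|[|r]]]]] //=.
by rewrite mul1n modn_mod eqxx orbT.
Qed.

Definition Vc c N : A := \prod_(i < N) (if (c %| i.+1)%N then 1 - 'X^(5 * i.+1) else 1).
Definition Vc' c N : A := \prod_(i < N) (if (c %| i.+1)%N then 1 - 'X^(i.+1) else 1).

Lemma Vc_comp c N : Vc c N = Vc' c N \Po 'X^5.
Proof.
rewrite /Vc /Vc' rmorph_prod; apply: eq_bigr => i _; case: ifP => _ /=; last by rewrite rmorph1.
by rewrite rmorphB rmorph1 /= comp_Xn_poly -exprM.
Qed.

Lemma Vc'0 c N : (Vc' c N)`_0 = 1.
Proof.
rewrite -horner_coef0 horner_prod big1 // => i _; case: ifP => _; last by rewrite hornerC.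
by rewrite hornerD hornerN hornerC hornerXn expr0n /= subr0.
Qed.

Lemma div_supp (g : nat -> bool) B (Q V' H : A) :
  (forall m, g m = g (m %% 5)%N) -> V'`_0 = 1 -> eqB B (Q * (V' \Po 'X^5)) H ->
  (forall m, (m <= B)%N -> ~~ g m -> H`_m = 0) ->
  forall m, (m <= B)%N -> ~~ g m -> Q`_m = 0.
Proof.
move=> gp V0 hE hH m; elim: m {-2}m (leqnn m) => [|M IH] m hmM hm hg.
  move: hmM hm hg; rewrite leqn0 => /eqP -> hm hg.
  by have := hE 0 hm; rewrite coef0M coef_comp_poly_Xn // dvdn0 div0n V0 mulr1 hH.
have := hE m hm; rewrite coefM big_ord_recr /= subnn coef_comp_poly_Xn // dvdn0 div0n V0 mulr1.
rewrite big1 ?add0r ?hH // => j _.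
rewrite coef_comp_poly_Xn //; case: ifP => hd; last by rewrite mulr0.
have hj := ltn_ord j.
rewrite (IH j) ?mul0r //; try lia.
rewrite gp; have -> : (j %% 5 = m %% 5)%N.
  by move: hd; rewrite /dvdn => /eqP h; lia.
by rewrite -gp.
Qed.

Definition Fk (n : nat) (z : algC) (k : nat) : A := \sum_(j < n.+1) z ^+ j *: 'X^(k * j).

Lemma geo n z k : (0 < k)%N -> eqB n ((1 - z *: 'X^k) * Fk n z k) 1.
Proof.
move=> k0.
have e : (1 - z *: 'X^k) * Fk n z k = 1 + (- z ^+ n.+1) *: 'X^(k * n.+1).
  have h := subrX1 (z *: 'X^k : A) n.+1.
  rewrite /Fk (eq_bigr (fun j : 'I_n.+1 => (z *: 'X^k) ^+ j)); last first.
    by move=> j _; rewrite exprZn -exprM.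
  by rewrite -opprB mulNr -h opprB exprZn -exprM scaleNr.
rewrite e; apply: eqB_1X; rewrite mulnS; have := leq_pmull n k0; lia.
Qed.

Definition Qc c n : A :=
  \prod_(i < n) (if (c %| i.+1)%N then Fk n w i.+1 * Fk n (w ^+ 4) i.+1 else 1).

Lemma Qc_V c n : eqB n (Qc c n * Vc c n) (Hc c n).
Proof.
rewrite /Qc /Vc /Hc -big_split /=; apply: eqB_prod => i _.
case: ifP => _; last by rewrite mulr1; exact: eqB_refl.
rewrite (_ : 1 - 'X^(5 * i.+1) = (1 - w *: 'X^(i.+1)) * (1 - w ^+ 4 *: 'X^(i.+1)) * hfy 'X^(i.+1)); last first.
  by rewrite /hfy five_prod -exprM mulnC.
rewrite mulrA -[X in eqB _ _ X]mul1r; apply: eqB_mul; last exact: eqB_refl.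
rewrite (_ : Fk n w i.+1 * Fk n (w ^+ 4) i.+1 * ((1 - w *: 'X^(i.+1)) * (1 - w ^+ 4 *: 'X^(i.+1))) = ((1 - w *: 'X^(i.+1)) * Fk n w i.+1) * ((1 - w ^+ 4 *: 'X^(i.+1)) * Fk n (w ^+ 4) i.+1)); last by ring.
by rewrite -[X in eqB _ _ X]mul1r; apply: eqB_mul; apply: geo.
Qed.

Lemma Qc_supp c n m : (0 < c)%N -> (m <= n)%N -> ~~ good c m -> (Qc c n)`_m = 0.
Proof.
move=> c0; apply: (@div_supp (good c) n (Qc c n) (Vc' c n) (Hc c n)).
- exact: good_mod.
- exact: Vc'0.
- by rewrite -Vc_comp; apply: Qc_V.
- by move=> k hk hg; apply: Hc_supp.
Qed.

Lemma QQ_coef c d n : (0 < c)%N -> (0 < d)%N ->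
  (forall i, (i <= n)%N -> good c i -> good d (n - i) -> False) ->
  (Qc c n * Qc d n)`_n = 0.
Proof.
move=> c0 d0 h; rewrite coefM big1 // => i _.
have hi : (i <= n)%N by rewrite -ltnS.
case hc: (good c i); last by rewrite Qc_supp ?hc ?mul0r.
case hd: (good d (n - i)); last by rewrite (@Qc_supp d n (n - i) d0) ?hd ?mulr0 ?leq_subr.
by case: (h i hi hc hd).
Qed.

End Supp.

Section Count.
Local Open Scope ring_scope.
Notation A := {poly algC}.

Definition Gp (n c : nat) (z : algC) : A :=
  \sum_(m : mpart n | Defs.pdiv c m) z ^+ plen m *: 'X^(psum m).

Lemma Gp_prod n c z : Gp n c z = \prod_(i < n) (if (c %| i.+1)%N then Fk n z i.+1 else 1).
Proof.
pose f (i : 'I_n) (j : 'I_n.+1) : A :=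
  if (c %| i.+1)%N then z ^+ j *: 'X^(i.+1 * j) else ((j : nat) == 0%N)%:R.
transitivity (\prod_(i < n) \sum_(j < n.+1) f i j); last first.
  apply: eq_bigr => i _; rewrite /f; case: ifP => _ //.
  by rewrite big_ord_recl /= big1 ?addr0 // => j _.
rewrite bigA_distr_bigA /Gp big_mkcond /=; apply: eq_bigr => m _.
case: ifP => hp.
  rewrite (eq_bigr (fun i => (z ^+ m i)%:P * 'X^(i.+1 * m i))); last first.
    move=> i _; rewrite /f; case: ifP => hd; first by rewrite mul_polyC.
    have : (m i : nat) = 0%N.
      move/forallP: hp => /(_ i) /implyP; case: (m i : nat) => // k /(_ isT).
      by rewrite hd.
    by move=> e; rewrite e muln0 expr0 mulr1 polyC1.
  by rewrite big_split /= -rmorph_prod /= !prodrXr mul_polyC.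
move/negbT: hp; rewrite /Defs.pdiv negb_forall => /existsP [i]; rewrite negb_imply => /andP [h1 h2].
rewrite (bigD1 i) //= /f (negbTE h2) (gtn_eqF h1) mul0r.
by [].
Qed.

Definition wt {n} (z1 z2 : algC) (q : quad n) : algC :=
  z1 ^+ plen (q_r q) * z2 ^+ plen (q_b q) * z1 ^+ plen (q_y q) * z2 ^+ plen (q_o q).

Lemma quad_coef n c d z1 z2 :
  (Gp n c z1 * Gp n c z2 * Gp n d z1 * Gp n d z2)`_n =
  \sum_(q in colored4 c d n) wt z1 z2 q.
Proof.
rewrite /Gp !(big_mkcond (fun m : mpart n => Defs.pdiv _ m)) /=.
rewrite big_distrlr pair_bigA big_distrlr pair_bigA big_distrlr pair_bigA /=.
rewrite coef_sum [RHS]big_mkcond /=; apply: eq_bigr => -[[[r b] y] o] _.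
rewrite /colored4 inE /q_r /q_b /q_y /q_o /wt /=.
case: (Defs.pdiv c r); last by rewrite !(mul0r, mulr0) coef0.
case: (Defs.pdiv c b); last by rewrite !(mul0r, mulr0) coef0.
case: (Defs.pdiv d y); last by rewrite !(mul0r, mulr0) coef0.
case: (Defs.pdiv d o); last by rewrite !(mul0r, mulr0) coef0.
rewrite /= -!mul_polyC.
set a1 := z1 ^+ _; set a2 := z2 ^+ _; set a3 := z1 ^+ plen y; set a4 := z2 ^+ _.
have eP : a1%:P * 'X^(psum r) * (a2%:P * 'X^(psum b)) * (a3%:P * 'X^(psum y)) *
   (a4%:P * 'X^(psum o)) = (a1 * a2 * a3 * a4)%:P * 'X^(psum r + psum b + psum y + psum o) :> A.
  by rewrite !rmorphM /= !exprD; ring.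
rewrite eP.
rewrite coefCM coefXn eq_sym.
by case: eqP => _; rewrite ?mulr1 ?mulr0.
Qed.

Lemma rk (a b c d k : nat) : (k < 5)%N ->
  ((((a%:Z - b%:Z + c%:Z - d%:Z)%R == k%:Z %[mod 5])%Z) = ((a + 4 * b + c + 4 * d) %% 5 == k)%N).
Proof. move=> hk; apply/idP/idP => /eqP h; apply/eqP; lia. Qed.

Definition ee {n} (q : quad n) : nat :=
  (plen (q_r q) + 4 * plen (q_b q) + plen (q_y q) + 4 * plen (q_o q))%N.

Lemma weighted n c d (z : algC) : z ^+ 5 = 1 ->
  \sum_(q in colored4 c d n) wt z (z ^+ 4) q = \sum_(k < 5) (N_cd c d k n)%:R * z ^+ k.
Proof.
move=> z5.
have e1 : forall q : quad n, wt z (z ^+ 4) q = \sum_(k < 5) ((ee q %% 5)%N == k)%:R * z ^+ k.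
  move=> q; rewrite /wt -!exprM -!exprD -(expr_mod _ z5) -/(ee q).
  have hk : (ee q %% 5 < 5)%N by apply: ltn_pmod.
  rewrite (bigD1 (Ordinal hk)) //= eqxx mul1r big1 ?addr0 // => k hk'.
  by rewrite eq_sym; move: hk'; rewrite -val_eqE /= => /negbTE ->; rewrite mul0r.
rewrite (eq_bigr _ (fun q _ => e1 q)) exchange_big /=; apply: eq_bigr => k _.
rewrite -big_distrl /=; congr (_ * _).
rewrite /N_cd -sum1_card natr_sum (big_mkcond (fun q => q \in _)) /=.
rewrite [RHS]big_mkcond /=; apply: eq_bigr => q _.
rewrite [in RHS]inE.
case: (q \in colored4 c d n) => //=.
rewrite /rank4 rk ?ltn_ord // -/(ee q).
by case: eqP.
Qed.

End Count.

Lemma table (ci dj x y : nat) : (ci < 5) -> (dj < 5) -> (x < 5) -> (y < 5) ->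
  (x == 0) || (x == ci) -> (y == 0) || (y == dj) -> ((x + y) %% 5 \in a_vals ci dj) = false.
Proof.
move: ci dj x y.
do 4!(case=> [|[|[|[|[|?]]]]] //=).
Qed.

Lemma aval_lt i j a : a \in a_vals i j -> a < 5.
Proof.
have : all (fun x => x < 5) (a_vals i j).
  rewrite /a_vals; case: (i <= j); move: i j; do 2!(case=> [|[|[|[|[|?]]]]] //=).
by move/allP => h /h.
Qed.


Section Final.
Local Open Scope ring_scope.

Lemma main_zero c d n (w : algC) : 5.-primitive_root w -> (0 < c)%N -> (0 < d)%N ->
  (forall i, (i <= n)%N -> good c i -> good d (n - i) -> False) ->
  \sum_(k < 5) (N_cd c d k n)%:R * w ^+ k = 0.
Proof.
move=> pw c0 d0 h.
rewrite -weighted ?(prim_expr_order pw) // -quad_coef !Gp_prod.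
have eQ x : Qc w x n = \prod_(i < n) (if (x %| i.+1)%N then Fk n w i.+1 else 1) *
   \prod_(i < n) (if (x %| i.+1)%N then Fk n (w ^+ 4) i.+1 else 1).
  by rewrite /Qc -big_split /=; apply: eq_bigr => i _; case: ifP; rewrite ?mulr1.
rewrite (_ : _ * _ * _ * _ = Qc w c n * Qc w d n); first exact: QQ_coef.
by rewrite !eQ; ring.
Qed.

Lemma geom5 (w : algC) m : 5.-primitive_root w ->
  \sum_(j < 5) (w ^+ m) ^+ j = if (5 %| m)%N then 5%:R else 0.
Proof.
move=> pw; case: ifP => hd.
  move/dvdnP: hd => [q ->]; rewrite mulnC exprM (prim_expr_order pw) expr1n.
  by rewrite (eq_bigr (fun _ => 1)) ?sumr_const ?card_ord // => j _; rewrite expr1n.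
have hx : w ^+ m != 1.
  by rewrite -(expr0 w) (eq_prim_root_expr pw) mod0n; move: hd; rewrite /dvdn => ->.
have := subrX1 (w ^+ m) 5.
rewrite -exprM mulnC exprM (prim_expr_order pw) expr1n subrr => /esym /eqP.
by rewrite mulf_eq0 subr_eq0 (negbTE hx) /= => /eqP.
Qed.

Lemma fourier c d n (w : algC) (k' : 'I_5) : 5.-primitive_root w -> (0 < c)%N -> (0 < d)%N ->
  (forall i, (i <= n)%N -> good c i -> good d (n - i) -> False) ->
  (5 * N_cd c d k' n = p_c2d2 c d n)%N.
Proof.
move=> pw c0 d0 h.
have Z : forall j : 'I_5, (0 < j)%N -> \sum_(k < 5) (N_cd c d k n)%:R * (w ^+ j) ^+ k = 0.
  move=> j hj; apply: main_zero => //.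
  rewrite prim_root_exp_coprime //.
  by case: j hj => -[|[|[|[|[|?]]]]].
have tot : (p_c2d2 c d n)%:R = \sum_(k < 5) (N_cd c d k n)%:R :> algC.
  have := @weighted n c d 1 (expr1n _ _).
  rewrite (eq_bigr (fun _ => 1)); last by move=> q _; rewrite /wt !expr1n !mulr1.
  rewrite sumr_const /p_c2d2 => ->; apply: eq_bigr => k _; rewrite expr1n mulr1.
  by [].
have F : \sum_(j < 5) (\sum_(k < 5) (N_cd c d k n)%:R * (w ^+ j) ^+ k) * (w ^+ j) ^+ (5 - k')
   = (p_c2d2 c d n)%:R.
  rewrite big_ord_recl /= [X in _ + X]big1 ?addr0; last by move=> j _; rewrite (Z (lift ord0 j)) // mul0r.
  by rewrite tot !expr0 expr1n mulr1; apply: eq_bigr => k _; rewrite expr1n mulr1.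
have F2 : \sum_(j < 5) (\sum_(k < 5) (N_cd c d k n)%:R * (w ^+ j) ^+ k) * (w ^+ j) ^+ (5 - k')
   = (5 * N_cd c d k' n)%:R.
  under eq_bigr do rewrite big_distrl /=.
  rewrite exchange_big /=.
  under eq_bigr do (under eq_bigr do rewrite -mulrA -!exprM -exprD -mulnDr mulnC exprM).
  rewrite (eq_bigr (fun k : 'I_5 => (N_cd c d k n)%:R * (if (5 %| k + (5 - k'))%N then 5%:R else 0))); last first.
    by move=> k _; rewrite -big_distrr /= geom5.
  rewrite (bigD1 k') //= big1; last first.
    move=> k hk; case: ifP => hd; last by rewrite mulr0.
    exfalso; move: hk hd; rewrite -val_eqE /=; have := ltn_ord k; have := ltn_ord k'.
    move=> h1 h2 hne; rewrite /dvdn => /eqP hm; move/negP: hne; apply; apply/eqP; lia.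
  have -> : (5 %| k' + (5 - k'))%N by rewrite subnKC ?dvdnn // ltnW.
  by rewrite addr0 natrM mulrC.
apply/eqP; rewrite -(eqr_nat algC) -F2 F.
by [].
Qed.

End Final.

Theorem theorem3p3 (c d i j a : nat) :
  1 <= c -> c <= d ->
  c %% 5 = i -> d %% 5 = j ->
  a \in a_vals i j ->
  forall n k : nat, k <= 4 ->
    ((N_cd c d k (5 * n + a))%:R = (p_c2d2 c d (5 * n + a))%:R / 5%:R :> rat)%R
    /\ 5 %| p_c2d2 c d (5 * n + a).
Proof.
move=> c1 cd ci dj ha n k hk.
have a5 := @aval_lt i j a ha.
have d1 : 0 < d by apply: leq_trans cd.
have [w pw] := @C_prim_root_exists 5 isT.
have hk5 : k < 5 by [].
have h : forall i0, i0 <= 5 * n + a -> good c i0 -> good d (5 * n + a - i0) -> False.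
  move=> i0 hi0 gc gd.
  have := @table (c %% 5) (d %% 5) (i0 %% 5) ((5 * n + a - i0) %% 5).
  rewrite !ltn_pmod // ci dj.
  have -> : (i0 %% 5 + (5 * n + a - i0) %% 5) %% 5 = a.
    rewrite modnDm subnKC // -modnDml modnMr add0n modn_small //.
  move=> /(_ isT isT isT isT) H; move: gc gd; rewrite /good ci dj => gc gd.
  by rewrite (H gc gd) in ha.
have e := @fourier c d (5 * n + a) w (Ordinal hk5) pw c1 d1 h.
rewrite /= in e; rewrite -e; split; last exact: dvdn_mulr.
by rewrite natrM mulrAC divff ?mul1r // pnatr_eq0.
Qed.
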